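(* In the Dynamic Accountable Storage construction described in the context, with the server's IBLT tree built on the protected Cartesian tree, space usage is $O(\delta)$ at the client and $O(n+\delta n/\beta)$ at the server, where $n$ is the number of stored blocks.
   Context: The client stores $n$ key-block pairs at a server. The client keeps only an IBLT (Invertible Bloom Lookup Table: a table of $O(\delta)$ cells holding XOR-sums of keys, blocks and tags) of all her key-block-tag triples (her keys themselves are not counted). The server stores the $n$ key-block-tag triples and an IBLT tree: a protected Cartesian tree on the keys, in which each node stores an IBLT with $O(\delta)$ cells of all triples in its subtree. Protected Cartesian tree with parameter $\beta$: let $h'$ be a random hash from keys to $[0,1]$; for a set $S$ of $n'$ triples, the protected region $P(S)$ consists of elements whose rank (number of smaller keys in $S$) is $\le\beta/2$ or $>n'-\beta/2$, and $U(S)=S\setminus P(S)$; if $|S|\le\beta$ the tree is a single leaf holding $S$, otherwise the root pivot is the element of $U(S)$ with smallest $h'$ value and the subtrees are built recursively on the elements with smaller and larger keys. *)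

(* Defs.v *)
From mathcomp Require Import all_boot all_order all_algebra.
Set Implicit Arguments. Unset Strict Implicit. Unset Printing Implicit Defensive.
Import Order.TTheory GRing.Theory Num.Theory.

(* A key-block-tag triple: ((key, block), tag). Keys, blocks, tags are bit
   strings, modelled as nat with bitwise XOR (Nat.lxor). *)
Definition triple := ((nat * nat) * nat)%type.
Definition tkey (x : triple) : nat := x.1.1.
Definition tblock (x : triple) : nat := x.1.2.
Definition ttag (x : triple) : nat := x.2.

Record cell := Cell { keySum : nat; blockSum : nat; tagSum : nat }.
Definition cell0 := Cell 0 0 0.
Definition cell_add (x : triple) (c : cell) : cell :=
  Cell (Nat.lxor (tkey x) (keySum c)) (Nat.lxor (tblock x) (blockSum c))
       (Nat.lxor (ttag x) (tagSum c)).

Definition iblt := seq cell.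
Definition iblt_build (m : nat) (hs : seq (nat -> nat)) (S : seq triple) : iblt :=
  mkseq (fun i => foldr (fun x c =>
            if i \in [seq h (tkey x) %% m | h <- hs] then cell_add x c else c)
          cell0 S) m.

Definition rank (S : seq triple) (x : triple) : nat :=
  count (fun y => tkey y < tkey x) S.

(* Protected region with parameter beta: rank <= beta/2 or rank > n' - beta/2
   (stated without division/truncation by doubling). *)
Definition protected (beta : nat) (S : seq triple) (x : triple) : bool :=
  (2 * rank S x <= beta) || (2 * size S < 2 * rank S x + beta).

Definition unprotected (beta : nat) (S : seq triple) : seq triple :=
  [seq x <- S | ~~ protected beta S x].

Definition argmin_h (h' : nat -> rat) (s : seq triple) : option triple :=
  foldr (fun x acc => match acc with
                      | None => Some x
                      | Some y => if (h' (tkey y) < h' (tkey x))%R then Some y else Some x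
                      end) None s.

Inductive ptree :=
| PLeaf of seq triple
| PNode of triple & ptree & ptree.

Fixpoint pct_build_fuel (beta : nat) (h' : nat -> rat) (fuel : nat)
    (S : seq triple) : ptree :=
  match fuel with
  | 0 => PLeaf S
  | f.+1 =>
    if size S <= beta then PLeaf S else
    match argmin_h h' (unprotected beta S) with
    | None => PLeaf S
    | Some p =>
        PNode p (pct_build_fuel beta h' f [seq y <- S | tkey y < tkey p])
                (pct_build_fuel beta h' f [seq y <- S | tkey p < tkey y])
    end
  end.

(* Fuel size S suffices: each recursive call is on a strictly smaller set. *)
Definition pct_build beta h' S := pct_build_fuel beta h' (size S) S.

Fixpoint ptree_elems (t : ptree) : seq triple :=
  match t with
  | PLeaf s => s
  | PNode p l r => ptree_elems l ++ p :: ptree_elems r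
  end.

Inductive ibltTree :=
| ILeaf of seq triple & iblt
| INode of triple & iblt & ibltTree & ibltTree.

Fixpoint iblt_tree_of (m : nat) (hs : seq (nat -> nat)) (t : ptree) : ibltTree :=
  match t with
  | PLeaf s => ILeaf s (iblt_build m hs s)
  | PNode p l r => INode p (iblt_build m hs (ptree_elems t))
                         (iblt_tree_of m hs l) (iblt_tree_of m hs r)
  end.

Fixpoint iblt_tree_cells (T : ibltTree) : nat :=
  match T with
  | ILeaf _ B => size B
  | INode _ B l r => size B + iblt_tree_cells l + iblt_tree_cells r
  end.

(* Space (in words: one unit per cell / per triple). *)
Definition client_space (m : nat) (hs : seq (nat -> nat)) (S : seq triple) : nat :=
  size (iblt_build m hs S).

Definition server_space (beta m : nat) (hs : seq (nat -> nat)) (h' : nat -> rat)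
    (S : seq triple) : nat :=
  size S + iblt_tree_cells (iblt_tree_of m hs (pct_build beta h' S)).

(* Main.v *)
Require Import Defs.
From mathcomp Require Import all_boot all_order all_algebra.
From mathcomp Require Import zify.

Fixpoint pnodes (t : ptree) : nat :=
  match t with
  | PLeaf _ => 1
  | PNode _ l r => (1 + pnodes l + pnodes r)%N
  end.

Lemma cells_tree m hs t : iblt_tree_cells (iblt_tree_of m hs t) = (m * pnodes t)%N.
Proof.
elim: t => [s|p l IHl r IHr] /=; rewrite /iblt_build size_mkseq ?muln1 //.
by rewrite IHl IHr !mulnDr muln1.
Qed.

Lemma argmin_mem h' s p : argmin_h h' s = Some p -> p \in s.
Proof.
elim: s p => [|x s IH] p //=.
case E: (argmin_h h' s) => [y|].
  case: ifP => _ [<-]; last by rewrite inE eqxx.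
  by rewrite inE (IH _ E) orbT.
by move=> [<-]; rewrite inE eqxx.
Qed.

Lemma count3 k (s : seq triple) :
  (count (fun y => tkey y < k) s + count (fun y => k < tkey y) s
   + count (fun y => tkey y == k) s = size s)%N.
Proof.
elim: s => [|x s IH] //=.
case: (ltngtP (tkey x) k) => H /=; lia.
Qed.

Lemma count_eq1 (s : seq triple) p : uniq (map tkey s) -> p \in s ->
  count (fun y => tkey y == tkey p) s = 1%N.
Proof.
move=> U Hp.
have := count_uniq_mem (tkey p) U.
rewrite (map_f tkey Hp) count_map /=.
move=> <-; apply: eq_count => y /=; by rewrite eq_sym.
Qed.

Lemma key_bound beta h' f (S : seq triple) :
  uniq (map tkey S) -> (beta <= 2 * size S + 2)%N ->
  (pnodes (pct_build_fuel beta h' f S) * beta + beta <= 4 * (size S + 1))%N.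
Proof.
elim: f S => [|f IH] S U Hb /=; first lia.
case: ifP => _ /=; first lia.
case E: (argmin_h h' (unprotected beta S)) => [p|] /=; last lia.
have := @argmin_mem _ _ _ E; rewrite mem_filter => /andP [NP pS].
move: NP; rewrite /protected /rank negb_or -!ltnNge => /andP [H1 H2].
have H3 := count3 (tkey p) S.
rewrite (count_eq1 _ _ U pS) in H3.
have UL : forall a, uniq (map tkey [seq y <- S | a y]).
  by move=> a; apply: (subseq_uniq _ U); apply: map_subseq; apply: filter_subseq.
have IL := IH _ (UL (fun y => tkey y < tkey p)).
have IR := IH _ (UL (fun y => tkey p < tkey y)).
rewrite !size_filter in IL IR.
have := IL ltac:(lia); have := IR ltac:(lia).
nia.
Qed.

Theorem lemma4 (c0 : nat) (cells : nat -> nat)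
  (Hcells : forall delta, cells delta <= c0 * delta) :
  exists C : nat,
    forall (delta beta : nat) (hs : seq (nat -> nat)) (h' : nat -> rat)
           (S : seq triple),
      uniq (map tkey S) ->
      (forall k, (0 <= h' k <= 1)%R) ->
      0 < beta -> beta <= size S ->
      client_space (cells delta) hs S <= C * delta /\
      server_space beta (cells delta) hs h' S * beta
        <= C * (size S * beta + delta * size S).
Proof.
exists (8 * c0 + 1)%N => delta beta hs h' S U _ Hb HS.
have Hc := Hcells delta.
split.
  rewrite /client_space /iblt_build size_mkseq; nia.
rewrite /server_space cells_tree /pct_build.
have K := key_bound beta h' (size S) S U ltac:(lia).
set N := pnodes _ in K *.
have : (cells delta * N * beta <= c0 * delta * (N * beta))%N.
  by rewrite -mulnA leq_mul2r Hc orbT.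
nia.
Qed.
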